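(* Let $X=(X_1,\dots,X_p)$ be a jointly continuous random vector in $\mathbb{R}^p$ and let $a_1,\dots,a_{\mathcal{R}}$ be rationally independent real numbers. Let $\mathcal{L}=\{X_ia_j:1\le i\le p,1\le j\le\mathcal{R}\}$ (viewed as a family of $p\mathcal{R}$ reals). Then $$\mathbb{P}(\mathcal{L}\text{ is rationally independent})=1.$$
   Context: A random vector in $\mathbb{R}^p$ is jointly continuous if it has a joint density with respect to Lebesgue measure. A finite family of reals $(x_k)$ is rationally independent if $\sum_kq_kx_k=0$ with $q_k\in\mathbb{Q}$ implies all $q_k=0$. *)

(* Defs.v *)
From HB Require Import structures.
From mathcomp Require Import all_boot all_order all_algebra.
From mathcomp Require Import all_classical all_reals all_analysis.
Set Implicit Arguments. Unset Strict Implicit. Unset Printing Implicit Defensive.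
Import Order.TTheory GRing.Theory Num.Theory.
Local Open Scope classical_set_scope.
Local Open Scope ring_scope.

Section defs.
Variable R : realType.

(* Integral over R^n (n-tuples of reals) with respect to the n-dimensional
   Lebesgue measure, written as the iterated integral
   \int dx_1 \int dx_2 ... \int dx_n g(x_1,...,x_n)
   (for nonnegative measurable g this is the Lebesgue integral on R^n,
   by Tonelli). *)
Fixpoint lebesgue_integral_Rn (n : nat) : (n.-tuple R -> \bar R) -> \bar R :=
  match n with
  | 0 => fun g => g [tuple]
  | n'.+1 => fun g =>
      (\int[@lebesgue_measure R]_x
         lebesgue_integral_Rn (fun t : n'.-tuple R => g (cons_tuple x t)))%E
  end.

Definition rationally_independent (I : finType) (x : I -> R) : Prop :=
  forall q : I -> rat, \sum_(k : I) ratr (q k) * x k = 0 -> forall k, q k = 0.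

End defs.

Definition random_vector (d : measure_display) (T : measurableType d)
  (R : realType) (P : probability T R) (p : nat)
  (X : 'I_p -> {RV P >-> R}) : T -> p.-tuple R :=
  fun w => [tuple X i w | i < p].

Definition jointly_continuous (d : measure_display) (T : measurableType d)
  (R : realType) (P : probability T R) (p : nat)
  (X : 'I_p -> {RV P >-> R}) : Prop :=
  exists f : p.-tuple R -> R,
    [/\ measurable_fun [set: p.-tuple R] f,
        (forall t, 0 <= f t) &
        forall A : set (p.-tuple R), measurable A ->
          P (random_vector X @^-1` A) =
          lebesgue_integral_Rn (fun t => ((\1_A t) * f t)%:E)].

(* Main.v *)
Require Import Defs.
From HB Require Import structures.
From mathcomp Require Import all_boot all_order all_algebra.
From mathcomp Require Import all_classical all_reals all_analysis.
Import Order.TTheory GRing.Theory Num.Theory.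
Local Open Scope classical_set_scope.
Local Open Scope ring_scope.

Lemma Rn0 (R : realType) n (g : n.-tuple R -> \bar R) :
  (forall t, g t = 0%E) -> lebesgue_integral_Rn g = 0%E.
Proof.
elim: n g => [|n IH] g g0 /=; first exact: g0.
by apply: integral0_eq => x _; apply: IH => t.
Qed.

Lemma tnthS' (R : Type) n (x : R) (t : n.-tuple R) i :
  tnth (cons_tuple x t) (lift ord0 i) = tnth t i.
Proof. exact: tnthS. Qed.
Lemma tnth0' (R : Type) n (x : R) (t : n.-tuple R) :
  tnth (cons_tuple x t) ord0 = x.
Proof. exact: tnth0. Qed.

Lemma Rn_hyper (R : realType) n (c : 'I_n -> R) (b : R)
  (g : n.-tuple R -> \bar R) :
  (exists i, c i != 0) ->
  (forall t, \sum_i c i * tnth t i != b -> g t = 0%E) ->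
  lebesgue_integral_Rn g = 0%E.
Proof.
elim: n c b g => [|n IH] c b g [i ci] gH; first by case: i ci.
rewrite /=.
have [[j cj]|] := pselect (exists j, c (lift ord0 j) != 0).
  apply: integral0_eq => x _.
  apply: (IH (fun j => c (lift ord0 j)) (b - c ord0 * x)); first by exists j.
  move=> t Ht; apply: gH; rewrite big_ord_recl tnth0'.
  apply: contra Ht => /eqP <-.
  apply/eqP; rewrite addrAC subrr add0r; apply: eq_bigr => k _.
  by congr (_ * _); rewrite tnthS'.
move=> nj.
have c0 : c ord0 != 0.
  apply/negP => /eqP c0; move: ci; case: (unliftP ord0 i) => [j ->|->]; last by rewrite c0 eqxx.
  by move=> cj; apply: nj; exists j.
set x0 := b / c ord0.
have H0 : forall x, x != x0 -> lebesgue_integral_Rn (fun t : n.-tuple R => g [tuple of x :: t]) = 0%E.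
  move=> x xx0; apply: Rn0 => t; apply: gH.
  rewrite big_ord_recl tnth0' big1 ?addr0; last first.
    move=> j _; have : c (lift ord0 j) = 0.
      by apply/eqP; apply: contra_notT nj => h; exists j.
    by move=> ->; rewrite mul0r.
  apply: contra xx0 => /eqP Hb; rewrite /x0 -Hb.
  by rewrite mulrC mulKf.
rewrite -(@integral_setD1 _ _ x0 setT) //.
- by apply: integral0_eq => x [_ /eqP]; exact: H0.
- exact: measurableD.
- eapply eq_measurable_fun. all: cycle 1. instantiate (1 := cst 0%E). exact: measurable_cst.
  by move=> x; rewrite inE => -[_ /eqP /H0 ->].
Qed.

Theorem lemma5 (d : measure_display) (T : measurableType d) (R : realType)
  (P : probability T R) (p r : nat) (X : 'I_p -> {RV P >-> R}) (a : 'I_r -> R) :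
  jointly_continuous X ->
  rationally_independent a ->
  P [set w | rationally_independent
               (fun ij : 'I_p * 'I_r => X ij.1 w * a ij.2)] = 1%E.
Proof.
move=> [f [mf f0 hf]] ha.
pose Eq (q : {ffun 'I_p * 'I_r -> rat}) :=
  [set w | \sum_(k : 'I_p * 'I_r) ratr (q k) * (X k.1 w * a k.2) = 0].
have mEq : forall q, measurable (Eq q).
  move=> q; rewrite -[Eq q]setTI.
  have Hm : forall k : 'I_p * 'I_r, measurable_fun setT (fun w => ratr (q k) * (X k.1 w * a k.2)).
    move=> k; apply: measurable_realfun.measurable_funM; first exact: measurable_cst.
    apply: measurable_realfun.measurable_funM; last exact: measurable_cst.
    exact: measurable_funP.
  exact: (@measurable_sum _ _ _ setT _ (index_enum _) _ Hm measurableT [set 0] (measurable_set1 0)).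
have PEq : forall q : {ffun 'I_p * 'I_r -> rat}, [exists k, q k != 0] -> P (Eq q) = 0%E.
  move=> q /existsP [[i0 j0] qk].
  pose c i := \sum_j ratr (q (i, j)) * a j.
  pose H := [set t : p.-tuple R | \sum_i c i * tnth t i = 0].
  have mH : measurable H.
    rewrite -[H]setTI.
    have Hm : forall i : 'I_p, measurable_fun setT (fun t : p.-tuple R => c i * tnth t i).
      move=> i; apply: measurable_realfun.measurable_funM; first exact: measurable_cst.
      exact: measurable_tnth.
    exact: (@measurable_sum _ _ _ setT _ (index_enum _) _ Hm measurableT [set 0] (measurable_set1 0)).
  have -> : Eq q = random_vector X @^-1` H.
    have Hs : forall w, \sum_i c i * tnth (random_vector X w) i =
              \sum_(k : 'I_p * 'I_r) ratr (q k) * (X k.1 w * a k.2).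
      move=> w; transitivity (\sum_(k : 'I_p * 'I_r) ratr (q (k.1, k.2)) * (X k.1 w * a k.2)); last by apply: eq_bigr => -[].
      rewrite -(pair_bigA _ (fun i j => ratr (q (i, j)) * (X i w * a j))) /=; apply: eq_bigr => i _.
      rewrite tnth_mktuple /c mulr_suml; apply: eq_bigr => j _.
      by rewrite mulrAC mulrA.
    by apply/seteqP; split => w /=; rewrite /H /= Hs.
  rewrite hf //; apply: (@Rn_hyper _ _ c 0).
    exists i0; apply/negP => /eqP ci0.
    by move: qk; rewrite (ha (fun j => q (i0, j)) ci0 j0) eqxx.
  move=> t Ht; rewrite /indic memNset ?mul0r //.
  by move=> /= /eqP; rewrite (negbTE Ht).
pose F n := match unpickle n : option {ffun 'I_p * 'I_r -> rat} with
  | Some q => if [exists k, q k != 0] then Eq q else set0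
  | None => set0 end.
have mF : forall n, measurable (F n).
  by move=> n; rewrite /F; case: (unpickle n) => [q|] //; case: ifP.
have PF : forall n, P (F n) = 0%E.
  move=> n; rewrite /F; case: (unpickle n) => [q|]; last exact: measure0.
  by case: ifP => [/PEq //|_]; exact: measure0.
have -> : [set w | rationally_independent
               (fun ij : 'I_p * 'I_r => X ij.1 w * a ij.2)] = ~` \bigcup_n F n.
  apply/seteqP; split => w /=.
  - move=> Hw [n _]; rewrite /F; case: (unpickle n) => [q|] //.
    case: ifP => // /existsP [k qk] Hq.
    by move: qk; rewrite (Hw (fun k => q k) Hq k) eqxx.
  - move=> nU q Hq k; apply: contra_notP nU => qk.
    exists (pickle (finfun q)) => //; rewrite /F pickleK.
    have -> : [exists k, finfun q k != 0] by apply/existsP; exists k; rewrite ffunE; apply/eqP.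
    by rewrite /Eq /=; under eq_bigr do rewrite ffunE.
have mU : measurable (\bigcup_n F n) by exact: bigcupT_measurable.
rewrite probability_setC //.
have -> : P (\bigcup_n F n) = 0%E.
  apply/(@negligibleP _ _ _ P _ mU); apply: negligible_bigcup => n.
  by apply/(@negligibleP _ _ _ P _ (mF n)); exact: PF.
by rewrite sube0.
Qed.
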